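(* Drift-less setting with target $\rho_d=|\Psi\rangle\langle\Psi|$. Let $D_k=D_{\mathcal N_k}\otimes I_{\bar{\mathcal N}_k}$ be QL operators with $D_k|\Psi\rangle=0$ such that $\mathfrak D(\mathcal H_0)$ is globally asymptotically stable for $\mathcal L_D=\mathcal L(0,\{D_k\})$ (every trajectory $e^{\mathcal L_Dt}(\rho_0)$, $\rho_0\in\mathfrak D(\mathcal H)$, converges to the set $\mathfrak D(\mathcal H_0)$). Let $\mathcal H'$ be a subspace with $\mathcal H_d\subseteq\mathcal H'\subseteq\mathcal H\ominus\mathcal H_w$ such that $\mathfrak D(\mathcal H')$ is invariant under $e^{\mathcal L_Dt}$ for all $t\ge0$. Then $\rho_d$ is conditionally asymptotically stable relative to $\mathcal H'$ for $\mathcal L_D$, i.e. $\rho_d$ is $\mathcal H'$-DQLS.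
   Context: $\mathcal H=\bigotimes_{a=1}^n\mathcal H_a$ finite-dimensional; neighborhoods $\mathcal N_k\subsetneq\{1,\dots,n\}$; QL operators have the form $X\otimes I_{\bar{\mathcal N}_k}$. $\mathfrak D(\mathcal K)$: density operators supported in $\mathcal K$. $\mathcal L(0,\{D_k\})(\rho)=\sum_k(D_k\rho D_k^\dagger-\frac12\{D_k^\dagger D_k,\rho\})$. $\mathcal H_d=\mathrm{span}\{|\Psi\rangle\}$; $\rho_{\mathcal N_k}=\mathrm{Tr}_{\bar{\mathcal N}_k}\rho_d$; $\mathcal H_0=\bigcap_k\mathrm{supp}(\rho_{\mathcal N_k}\otimes I_{\bar{\mathcal N}_k})$; $\mathcal H_w=\mathcal H_0\ominus\mathcal H_d$. Conditional asymptotic stability relative to $\mathcal H'$: $e^{\mathcal L_Dt}(\rho_0)\to\rho_d$ for all $\rho_0\in\mathfrak D(\mathcal H')$. *)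

(* Defs.v *)
From Stdlib Require Import Reals List Arith.
Import ListNotations.
Open Scope R_scope.

Record C := mkC { Re : R; Im : R }.
Definition C0 : C := mkC 0 0.
Definition Cadd (x y : C) : C := mkC (Re x + Re y) (Im x + Im y).
Definition Copp (x : C) : C := mkC (- Re x) (- Im x).
Definition Csub (x y : C) : C := Cadd x (Copp y).
Definition Cmul (x y : C) : C :=
  mkC (Re x * Re y - Im x * Im y) (Re x * Im y + Im x * Re y).
Definition Cconj (x : C) : C := mkC (Re x) (- Im x).
Definition Cscal (r : R) (x : C) : C := mkC (r * Re x) (r * Im x).
Definition Cnorm2 (x : C) : R := Re x * Re x + Im x * Im x.

Fixpoint Csum (n : nat) (f : nat -> C) : C :=
  match n with O => C0 | S m => Cadd (Csum m f) (f m) end.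

Fixpoint Rsum (n : nat) (f : nat -> R) : R :=
  match n with O => 0 | S m => Rsum m f + f m end.

(** Matrices / vectors of dimension N: only entries with indices < N matter. *)
Definition Mat := nat -> nat -> C.
Definition Vec := nat -> C.

Definition mmul (N : nat) (A B : Mat) : Mat :=
  fun i j => Csum N (fun k => Cmul (A i k) (B k j)).
Definition madd (A B : Mat) : Mat := fun i j => Cadd (A i j) (B i j).
Definition msub (A B : Mat) : Mat := fun i j => Csub (A i j) (B i j).
Definition mscal (r : R) (A : Mat) : Mat := fun i j => Cscal r (A i j).
Definition adj (A : Mat) : Mat := fun i j => Cconj (A j i).
Definition mapply (N : nat) (A : Mat) (v : Vec) : Vec :=
  fun i => Csum N (fun j => Cmul (A i j) (v j)).
Definition inner (N : nat) (u v : Vec) : C :=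
  Csum N (fun i => Cmul (Cconj (u i)) (v i)).
Definition trace (N : nat) (A : Mat) : C := Csum N (fun i => A i i).
Definition ketbra (psi : Vec) : Mat := fun i j => Cmul (psi i) (Cconj (psi j)).

Definition Lindblad (N K : nat) (Ds : nat -> Mat) (rho : Mat) : Mat :=
  fun i j => Csum K (fun k =>
    let D := Ds k in
    let DdD := mmul N (adj D) D in
    msub (mmul N (mmul N D rho) (adj D))
         (mscal (1/2) (madd (mmul N DdD rho) (mmul N rho DdD))) i j).

Definition Lpow (N K : nat) (Ds : nat -> Mat) (m : nat) (rho : Mat) : Mat :=
  Nat.iter m (Lindblad N K Ds) rho.

(** Evol N K Ds t rho0 sigma : sigma = e^{L t}(rho0), the exponential being
    the entrywise sum of the power series  sum_m t^m/m! L^m(rho0). *)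
Definition Evol (N K : nat) (Ds : nat -> Mat) (t : R) (rho0 sigma : Mat) : Prop :=
  forall i j, (i < N)%nat -> (j < N)%nat ->
    infinite_sum (fun m => Re (Cscal (t ^ m / INR (fact m)) (Lpow N K Ds m rho0 i j)))
                 (Re (sigma i j)) /\
    infinite_sum (fun m => Im (Cscal (t ^ m / INR (fact m)) (Lpow N K Ds m rho0 i j)))
                 (Im (sigma i j)).

Definition is_density (N : nat) (s : Mat) : Prop :=
  (forall i j, (i < N)%nat -> (j < N)%nat -> s i j = Cconj (s j i)) /\
  (forall v : Vec, 0 <= Re (inner N v (mapply N s v))) /\
  Re (trace N s) = 1.

(** s in D(Ksp): density operator whose support (= range) lies in Ksp *)
Definition dens_in (N : nat) (Ksp : Vec -> Prop) (s : Mat) : Prop :=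
  is_density N s /\ forall v : Vec, Ksp (mapply N s v).

Definition hsdist2 (N : nat) (A B : Mat) : R :=
  Rsum N (fun i => Rsum N (fun j => Cnorm2 (Csub (A i j) (B i j)))).

Definition is_subspace (N : nat) (P : Vec -> Prop) : Prop :=
  P (fun _ => C0) /\
  (forall u v, P u -> P v -> P (fun i => Cadd (u i) (v i))) /\
  (forall c u, P u -> P (fun i => Cmul c (u i))) /\
  (forall u v, (forall i, (i < N)%nat -> u i = v i) -> P u -> P v).

(** Tensor-product structure: n subsystems of dimensions d 0, ..., d (n-1);
    basis index i < dimH n d  <->  digit tuple (digit d i a)_{a<n} (mixed radix). *)
Fixpoint prodd (d : nat -> nat) (a : nat) : nat :=
  match a with O => 1%nat | S b => (prodd d b * d b)%nat end.
Definition dimH (n : nat) (d : nat -> nat) : nat := prodd d n.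
Definition digit (d : nat -> nat) (i a : nat) : nat := ((i / prodd d a) mod d a)%nat.

Definition agree_out (n : nat) (S : nat -> bool) (x y : nat -> nat) : bool :=
  forallb (fun a => orb (S a) (Nat.eqb (x a) (y a))) (seq 0 n).
Definition agree_in (n : nat) (S : nat -> bool) (x y : nat -> nat) : bool :=
  forallb (fun a => orb (negb (S a)) (Nat.eqb (x a) (y a))) (seq 0 n).
Definition restrict (n : nat) (S : nat -> bool) (x : nat -> nat) : nat -> nat :=
  fun a => if andb (Nat.ltb a n) (S a) then x a else 0%nat.

(** A is quasi-local w.r.t. neighborhood S: A = X_S (x) I_{complement of S} *)
Definition QL (n : nat) (d : nat -> nat) (S : nat -> bool) (A : Mat) : Prop :=
  exists X : (nat -> nat) -> (nat -> nat) -> C,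
    forall i j, (i < dimH n d)%nat -> (j < dimH n d)%nat ->
      A i j = if agree_out n S (digit d i) (digit d j)
              then X (restrict n S (digit d i)) (restrict n S (digit d j))
              else C0.

(** (Tr_{complement of S} rho) (x) I_{complement of S} *)
Definition margI (n : nat) (d : nat -> nat) (S : nat -> bool) (rho : Mat) : Mat :=
  fun i j =>
    if agree_out n S (digit d i) (digit d j) then
      Csum (dimH n d) (fun l => Csum (dimH n d) (fun m =>
        if andb (agree_in n S (digit d l) (digit d i))
           (andb (agree_in n S (digit d m) (digit d j))
                 (agree_out n S (digit d l) (digit d m)))
        then rho l m else C0))
    else C0.

Definition Hd (N : nat) (psi : Vec) (v : Vec) : Prop :=
  exists c : C, forall i, (i < N)%nat -> v i = Cmul c (psi i).

Definition H0 (n : nat) (d : nat -> nat) (K : nat) (Ns : nat -> nat -> bool)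
  (rhod : Mat) (v : Vec) : Prop :=
  forall k, (k < K)%nat -> exists w : Vec, forall i, (i < dimH n d)%nat ->
    v i = mapply (dimH n d) (margI n d (Ns k) rhod) w i.

Definition Hw (n : nat) (d : nat -> nat) (K : nat) (Ns : nat -> nat -> bool)
  (psi : Vec) (v : Vec) : Prop :=
  H0 n d K Ns (ketbra psi) v /\
  forall u, Hd (dimH n d) psi u -> inner (dimH n d) u v = C0.

Definition perp_Hw (n : nat) (d : nat -> nat) (K : nat) (Ns : nat -> nat -> bool)
  (psi : Vec) (v : Vec) : Prop :=
  forall w, Hw n d K Ns psi w -> inner (dimH n d) w v = C0.

(* Main.v *)
Require Import Defs.
From Stdlib Require Import Reals List Arith Lra Lia Psatz.
Import Defs.
Open Scope R_scope.

Lemma C_ext : forall x y : C, Re x = Re y -> Im x = Im y -> x = y.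
Proof. intros [a b] [c e]; simpl; intros; subst; auto. Qed.

Ltac Csolve := apply C_ext; simpl; ring.

Definition Cone : C := mkC 1 0.
Definition ev (j : nat) : Vec := fun k => if Nat.eqb k j then Cone else C0.
Definition cm (x : C) : R := Rabs (Re x) + Rabs (Im x).

Lemma Csum_ext : forall n f g, (forall k, (k < n)%nat -> f k = g k) -> Csum n f = Csum n g.
Proof. induction n; intros f g H; simpl; auto. rewrite (IHn f g); [rewrite H; auto|]. intros; apply H; lia. Qed.

Lemma Csum_zero : forall n f, (forall k, (k < n)%nat -> f k = C0) -> Csum n f = C0.
Proof. induction n; intros f H; simpl; auto. rewrite IHn, H. Csolve. lia. intros; apply H; lia. Qed.

Lemma Csum_add : forall n f g, Csum n (fun k => Cadd (f k) (g k)) = Cadd (Csum n f) (Csum n g).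
Proof. induction n; intros; simpl. Csolve. rewrite IHn. Csolve. Qed.

Lemma Csum_sub : forall n f g, Csum n (fun k => Csub (f k) (g k)) = Csub (Csum n f) (Csum n g).
Proof. induction n; intros; simpl. Csolve. rewrite IHn. Csolve. Qed.

Lemma Csum_mull : forall n c f, Csum n (fun k => Cmul c (f k)) = Cmul c (Csum n f).
Proof. induction n; intros; simpl. Csolve. rewrite IHn. Csolve. Qed.

Lemma Csum_mulr : forall n c f, Csum n (fun k => Cmul (f k) c) = Cmul (Csum n f) c.
Proof. induction n; intros; simpl. Csolve. rewrite IHn. Csolve. Qed.

Lemma Csum_conj : forall n f, Csum n (fun k => Cconj (f k)) = Cconj (Csum n f).
Proof. induction n; intros; simpl. Csolve. rewrite IHn. Csolve. Qed.

Lemma Csum_swap : forall n m f,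
  Csum n (fun i => Csum m (fun j => f i j)) = Csum m (fun j => Csum n (fun i => f i j)).
Proof.
  induction n; intros; simpl.
  - symmetry; apply Csum_zero; intros; Csolve.
  - rewrite IHn, <- Csum_add. reflexivity.
Qed.

Lemma Re_Csum : forall n f, Re (Csum n f) = Rsum n (fun k => Re (f k)).
Proof. induction n; intros; simpl; auto. rewrite IHn; auto. Qed.
Lemma Im_Csum : forall n f, Im (Csum n f) = Rsum n (fun k => Im (f k)).
Proof. induction n; intros; simpl; auto. rewrite IHn; auto. Qed.

Lemma Csum_delta : forall n j f, (j < n)%nat ->
  Csum n (fun k => Cmul (f k) (ev j k)) = f j.
Proof.
  induction n; intros j f Hj; [lia|]. simpl.
  unfold ev at 2. destruct (Nat.eqb n j) eqn:E.
  - apply Nat.eqb_eq in E; subst.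
    rewrite Csum_zero. Csolve. intros k Hk. unfold ev.
    destruct (Nat.eqb k j) eqn:E'; [apply Nat.eqb_eq in E'; lia|]. Csolve.
  - apply Nat.eqb_neq in E. rewrite IHn by lia. Csolve.
Qed.

Lemma Csum_delta_l : forall n j f, (j < n)%nat ->
  Csum n (fun k => Cmul (Cconj (ev j k)) (f k)) = f j.
Proof.
  intros. rewrite <- (Csum_delta n j f) by auto. apply Csum_ext; intros.
  unfold ev; destruct (Nat.eqb k j); Csolve.
Qed.

Lemma Rsum_le : forall n f g, (forall k, (k < n)%nat -> f k <= g k) -> Rsum n f <= Rsum n g.
Proof. induction n; intros f g H; simpl. lra. assert (H1:= H n (Nat.lt_succ_diag_r n)).
  assert (Rsum n f <= Rsum n g) by (apply IHn; intros; apply H; lia). lra. Qed.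

Lemma Rsum_const : forall n B, Rsum n (fun _ => B) = INR n * B.
Proof. induction n; intros; simpl Rsum. simpl; ring. rewrite IHn, S_INR; ring. Qed.

Lemma Rsum_bound : forall n f B, (forall k, (k < n)%nat -> f k <= B) -> Rsum n f <= INR n * B.
Proof. intros. rewrite <- Rsum_const. apply Rsum_le; auto. Qed.

Lemma Rsum_nonneg : forall n f, (forall k, (k < n)%nat -> 0 <= f k) -> 0 <= Rsum n f.
Proof. intros. replace 0 with (INR n * 0) by ring. rewrite <- Rsum_const. apply Rsum_le; auto. Qed.

Lemma Rsum_term : forall n f i, (forall k, (k < n)%nat -> 0 <= f k) -> (i < n)%nat -> f i <= Rsum n f.
Proof.
  induction n; intros f i H Hi; [lia|]. simpl.
  destruct (Nat.eq_dec i n).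
  - subst. assert (0 <= Rsum n f) by (apply Rsum_nonneg; intros; apply H; lia). lra.
  - assert (f i <= Rsum n f) by (apply IHn; [intros; apply H; lia| lia]).
    assert (0 <= f n) by (apply H; lia). lra.
Qed.

Lemma cm_nonneg : forall x, 0 <= cm x.
Proof. intros; unfold cm; pose proof (Rabs_pos (Re x)); pose proof (Rabs_pos (Im x)); lra. Qed.

Lemma cm_add : forall x y, cm (Cadd x y) <= cm x + cm y.
Proof. intros; unfold cm; simpl. pose proof (Rabs_triang (Re x) (Re y)).
  pose proof (Rabs_triang (Im x) (Im y)). lra. Qed.

Lemma cm_opp : forall x, cm (Copp x) = cm x.
Proof. intros; unfold cm; simpl. rewrite !Rabs_Ropp; auto. Qed.

Lemma cm_conj : forall x, cm (Cconj x) = cm x.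
Proof. intros; unfold cm; simpl. rewrite !Rabs_Ropp; auto. Qed.

Lemma cm_sub : forall x y, cm (Csub x y) <= cm x + cm y.
Proof. intros; unfold Csub. rewrite <- (cm_opp y). apply cm_add. Qed.

Lemma cm_sub_sym : forall x y, cm (Csub x y) = cm (Csub y x).
Proof. intros. replace (Csub y x) with (Copp (Csub x y)) by Csolve. rewrite cm_opp; auto. Qed.

Lemma cm_mul : forall x y, cm (Cmul x y) <= cm x * cm y.
Proof.
  intros [a b] [c e]; unfold cm; simpl.
  pose proof (Rabs_triang (a*c) (- (b*e))). pose proof (Rabs_triang (a*e) (b*c)).
  rewrite Rabs_Ropp in H. rewrite !Rabs_mult in H, H0.
  pose proof (Rabs_pos a). pose proof (Rabs_pos b). pose proof (Rabs_pos c). pose proof (Rabs_pos e).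
  unfold Rminus. replace (b * - e) with (- (b*e)) by ring. lra.
Qed.

Lemma cm_C0 : cm C0 = 0.
Proof. unfold cm; simpl; rewrite Rabs_R0; ring. Qed.

Lemma Rabs_sq : forall a, Rabs a * Rabs a = a * a.
Proof. intros. rewrite <- Rabs_mult. apply Rabs_pos_eq. nra. Qed.

Lemma cm_sq : forall x, cm x * cm x <= 2 * Cnorm2 x.
Proof. intros [a b]; unfold cm, Cnorm2; simpl.
  pose proof (Rabs_sq a); pose proof (Rabs_sq b).
  pose proof (Rle_0_sqr (Rabs a - Rabs b)); unfold Rsqr in *. nra. Qed.

Lemma Cnorm2_cm : forall x, Cnorm2 x <= cm x * cm x.
Proof. intros [a b]; unfold cm, Cnorm2; simpl.
  pose proof (Rabs_sq a); pose proof (Rabs_sq b).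
  pose proof (Rabs_pos a). pose proof (Rabs_pos b). nra. Qed.

Lemma Cnorm2_nonneg : forall x, 0 <= Cnorm2 x.
Proof. intros [a b]; unfold Cnorm2; simpl; nra. Qed.

Lemma cm_Csum : forall n f, cm (Csum n f) <= Rsum n (fun k => cm (f k)).
Proof. induction n; intros; simpl. rewrite cm_C0; lra.
  pose proof (cm_add (Csum n f) (f n)). pose proof (IHn f). lra. Qed.

Lemma cm_Csum_bound : forall n f B, (forall k, (k < n)%nat -> cm (f k) <= B) ->
  cm (Csum n f) <= INR n * B.
Proof. intros. eapply Rle_trans; [apply cm_Csum|]. apply Rsum_bound; auto. Qed.

Lemma cm_mul_bound : forall x y a b, cm x <= a -> cm y <= b -> cm (Cmul x y) <= a * b.
Proof. intros. eapply Rle_trans; [apply cm_mul|]. pose proof (cm_nonneg x); pose proof (cm_nonneg y).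
  apply Rmult_le_compat; auto. Qed.

Lemma cm_le_2 : forall x, Cnorm2 x <= 1 -> cm x <= 2.
Proof. intros. pose proof (cm_sq x). pose proof (cm_nonneg x). nra. Qed.


Lemma mapply_ev : forall N s j i, (j < N)%nat -> mapply N s (ev j) i = s i j.
Proof. intros. unfold mapply. apply Csum_delta; auto. Qed.

Section Dens.
Variable N : nat.
Variable s : Mat.
Hypothesis Hs : is_density N s.

Lemma dens_herm : forall i j, (i < N)%nat -> (j < N)%nat -> s i j = Cconj (s j i).
Proof. destruct Hs as [H _]; auto. Qed.

Lemma dens_diag_im : forall i, (i < N)%nat -> Im (s i i) = 0.
Proof. intros. pose proof (dens_herm i i H H). destruct (s i i) as [a b]; simpl in *.
  injection H0; intros; lra. Qed.

Lemma dens_diag_nonneg : forall i, (i < N)%nat -> 0 <= Re (s i i).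
Proof. intros. destruct Hs as [_ [H2 _]]. specialize (H2 (ev i)).
  unfold inner in H2. rewrite (Csum_ext _ _ (fun k => Cmul (Cconj (ev i k)) (s k i))) in H2.
  rewrite Csum_delta_l in H2; auto. intros; rewrite mapply_ev; auto. Qed.

Lemma dens_trace : Csum N (fun i => s i i) = Cone.
Proof. destruct Hs as [_ [_ H3]]. unfold trace in H3. apply C_ext; simpl; auto.
  rewrite Im_Csum. replace 0 with (INR N * 0) by ring. rewrite <- Rsum_const.
  apply Rle_antisym; apply Rsum_le; intros; rewrite dens_diag_im; auto; lra. Qed.

Lemma dens_diag_le1 : forall i, (i < N)%nat -> Re (s i i) <= 1.
Proof. intros. destruct Hs as [_ [_ H3]]. unfold trace in H3. rewrite Re_Csum in H3.
  rewrite <- H3. apply (Rsum_term N (fun k => Re (s k k))); auto. intros; apply dens_diag_nonneg; auto. Qed.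

Lemma dens_bound : forall i j, (i < N)%nat -> (j < N)%nat -> Cnorm2 (s i j) <= 1.
Proof.
  intros i j Hi Hj. destruct (Nat.eq_dec i j).
  - subst. unfold Cnorm2. rewrite dens_diag_im; auto.
    pose proof (dens_diag_nonneg j Hj); pose proof (dens_diag_le1 j Hj). nra.
  - destruct Hs as [_ [H2 _]].
    set (y := Copp (Cconj (s i j))).
    specialize (H2 (fun k => Cadd (ev i k) (Cmul y (ev j k)))).
    assert (Hm : forall a, mapply N s (fun k => Cadd (ev i k) (Cmul y (ev j k))) a = Cadd (s a i) (Cmul y (s a j))).
    { intros a. unfold mapply.
      rewrite (Csum_ext _ _ (fun k => Cadd (Cmul (s a k) (ev i k)) (Cmul y (Cmul (s a k) (ev j k))))).
      rewrite Csum_add, Csum_mull, !Csum_delta; auto. intros; Csolve. }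
    unfold inner in H2.
    rewrite (Csum_ext _ _ (fun a => Cadd (Cmul (Cconj (ev i a)) (Cadd (s a i) (Cmul y (s a j))))
        (Cmul (Cconj y) (Cmul (Cconj (ev j a)) (Cadd (s a i) (Cmul y (s a j))))))) in H2.
    2:{ intros; rewrite Hm; Csolve. }
    rewrite Csum_add, Csum_mull, !(Csum_delta_l N) in H2; auto.
    rewrite (dens_herm j i) in H2; auto.
    pose proof (dens_diag_im i Hi). pose proof (dens_diag_im j Hj).
    pose proof (dens_diag_nonneg i Hi); pose proof (dens_diag_le1 i Hi).
    pose proof (dens_diag_nonneg j Hj); pose proof (dens_diag_le1 j Hj).
    unfold y in H2. destruct (s i j) as [a b]. destruct (s i i) as [p q]. destruct (s j j) as [u v].
    simpl in *. unfold Cnorm2; simpl. subst. nra.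
Qed.

Lemma dens_cm : forall i j, (i < N)%nat -> (j < N)%nat -> cm (s i j) <= 2.
Proof. intros; apply cm_le_2, dens_bound; auto. Qed.

End Dens.


Section Psi.
Variable N : nat.
Variable psi : Vec.
Hypothesis hpsi : Re (inner N psi psi) = 1.

Lemma psi_inner : inner N psi psi = Cone.
Proof. apply C_ext; auto. unfold inner; rewrite Im_Csum. simpl.
  replace 0 with (INR N * 0) by ring. rewrite <- Rsum_const.
  apply Rle_antisym; apply Rsum_le; intros; simpl; lra. Qed.

Lemma psi_norm : Csum N (fun i => Cmul (psi i) (Cconj (psi i))) = Cone.
Proof. rewrite <- psi_inner. unfold inner. apply Csum_ext; intros; Csolve. Qed.

Lemma psi_bound : forall i, (i < N)%nat -> cm (psi i) <= 2.
Proof. intros. apply cm_le_2. rewrite <- hpsi. unfold inner. rewrite Re_Csum.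
  replace (Cnorm2 (psi i)) with ((fun k => Re (Cmul (Cconj (psi k)) (psi k))) i).
  apply (Rsum_term N (fun k => Re (Cmul (Cconj (psi k)) (psi k))) i); auto. intros; simpl; nra. simpl; unfold Cnorm2; ring. Qed.

Lemma ketbra_density : is_density N (ketbra psi).
Proof.
  split; [|split].
  - intros; unfold ketbra; Csolve.
  - intros v. set (q := Csum N (fun k => Cmul (Cconj (psi k)) (v k))).
    assert (Hm : forall a, mapply N (ketbra psi) v a = Cmul (psi a) q).
    { intros; unfold mapply, ketbra, q. rewrite <- Csum_mull. apply Csum_ext; intros; Csolve. }
    unfold inner. rewrite (Csum_ext _ _ (fun a => Cmul (Cmul (Cconj (v a)) (psi a)) q)).
    2:{ intros; rewrite Hm; Csolve. }
    rewrite Csum_mulr.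
    replace (Csum N (fun a => Cmul (Cconj (v a)) (psi a))) with (Cconj q).
    + destruct q; simpl; nra.
    + unfold q; rewrite <- Csum_conj; apply Csum_ext; intros; Csolve.
  - unfold trace, ketbra. rewrite psi_norm. reflexivity.
Qed.

End Psi.

Lemma mmul_zero_r : forall N A B i j, (forall k, (k < N)%nat -> B k j = C0) -> mmul N A B i j = C0.
Proof. intros; unfold mmul; apply Csum_zero; intros; rewrite H; auto; Csolve. Qed.
Lemma mmul_zero_l : forall N A B i j, (forall k, (k < N)%nat -> A i k = C0) -> mmul N A B i j = C0.
Proof. intros; unfold mmul; apply Csum_zero; intros; rewrite H; auto; Csolve. Qed.

Lemma Lindblad_zero : forall N K Ds X, (forall i j, (i < N)%nat -> (j < N)%nat -> X i j = C0) ->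
  forall i j, (i < N)%nat -> (j < N)%nat -> Lindblad N K Ds X i j = C0.
Proof.
  intros. unfold Lindblad. apply Csum_zero; intros k Hk. unfold msub, mscal, madd.
  rewrite (mmul_zero_l N (mmul N (Ds k) X)).
  2:{ intros; apply mmul_zero_r; intros; auto. }
  rewrite (mmul_zero_r N _ X) by auto. rewrite (mmul_zero_l N X) by auto. Csolve.
Qed.

Section Stat.
Variable N : nat.
Variable psi : Vec.
Variable D : Mat.
Hypothesis Hk : forall i, (i < N)%nat -> mapply N D psi i = C0.

Lemma DR : forall i j, (i < N)%nat -> mmul N D (ketbra psi) i j = C0.
Proof. intros. unfold mmul, ketbra.
  rewrite (Csum_ext _ _ (fun k => Cmul (Cmul (D i k) (psi k)) (Cconj (psi j)))) by (intros; Csolve).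
  rewrite Csum_mulr. change (Csum N (fun k => Cmul (D i k) (psi k))) with (mapply N D psi i).
  rewrite Hk; auto. Csolve. Qed.

Lemma DDR : forall i j, mmul N (mmul N (adj D) D) (ketbra psi) i j = C0.
Proof. intros. unfold mmul at 1.
  rewrite (Csum_ext _ _ (fun k => Csum N (fun l => Cmul (Cmul (adj D i l) (D l k)) (ketbra psi k j)))).
  2:{ intros; unfold mmul; rewrite Csum_mulr; auto. }
  rewrite Csum_swap. apply Csum_zero; intros l Hl.
  rewrite (Csum_ext _ _ (fun k => Cmul (adj D i l) (Cmul (D l k) (ketbra psi k j)))) by (intros; Csolve).
  rewrite Csum_mull. change (Csum N (fun k => Cmul (D l k) (ketbra psi k j))) with (mmul N D (ketbra psi) l j).
  rewrite DR; auto. Csolve. Qed.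

Lemma RDD : forall i j, mmul N (ketbra psi) (mmul N (adj D) D) i j = C0.
Proof. intros. unfold mmul at 1.
  rewrite (Csum_ext _ _ (fun k => Csum N (fun l => Cmul (ketbra psi i k) (Cmul (adj D k l) (D l j))))).
  2:{ intros; unfold mmul; rewrite Csum_mull; auto. }
  rewrite Csum_swap. apply Csum_zero; intros l Hl.
  rewrite (Csum_ext _ _ (fun k => Cmul (Cmul (psi i) (Cconj (Cmul (D l k) (psi k)))) (D l j))).
  2:{ intros; unfold ketbra, adj; Csolve. }
  rewrite Csum_mulr, Csum_mull, Csum_conj.
  change (Csum N (fun k => Cmul (D l k) (psi k))) with (mapply N D psi l).
  rewrite Hk; auto. Csolve. Qed.
End Stat.

Lemma Lindblad_ketbra : forall N K Ds psi,
  (forall k, (k < K)%nat -> forall i, (i < N)%nat -> mapply N (Ds k) psi i = C0) ->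
  forall i j, (i < N)%nat -> (j < N)%nat -> Lindblad N K Ds (ketbra psi) i j = C0.
Proof.
  intros. unfold Lindblad. apply Csum_zero; intros k Hk. unfold msub, mscal, madd.
  rewrite (mmul_zero_l N (mmul N (Ds k) (ketbra psi))).
  2:{ intros; apply DR; auto. }
  rewrite DDR, RDD; auto. Csolve.
Qed.

Lemma Lpow_ketbra : forall N K Ds psi,
  (forall k, (k < K)%nat -> forall i, (i < N)%nat -> mapply N (Ds k) psi i = C0) ->
  forall m i j, (i < N)%nat -> (j < N)%nat -> Lpow N K Ds (S m) (ketbra psi) i j = C0.
Proof.
  intros N K Ds psi H m. induction m; intros.
  - apply Lindblad_ketbra; auto.
  - change (Lpow N K Ds (S (S m)) (ketbra psi)) with (Lindblad N K Ds (Lpow N K Ds (S m) (ketbra psi))).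
    apply Lindblad_zero; auto.
Qed.

Lemma Evol_ketbra : forall N K Ds psi,
  (forall k, (k < K)%nat -> forall i, (i < N)%nat -> mapply N (Ds k) psi i = C0) ->
  forall t, Evol N K Ds t (ketbra psi) (ketbra psi).
Proof.
  intros N K Ds psi H t i j Hi Hj.
  assert (Hs : forall (g : C -> R), g C0 = 0 -> g (Cscal 1 (ketbra psi i j)) = g (ketbra psi i j) ->
     infinite_sum (fun m => g (Cscal (t ^ m / INR (fact m)) (Lpow N K Ds m (ketbra psi) i j))) (g (ketbra psi i j))).
  { intros g g0 g1. intros eps Heps. exists 0%nat. intros n _.
    assert (sum_f_R0 (fun m => g (Cscal (t ^ m / INR (fact m)) (Lpow N K Ds m (ketbra psi) i j))) n = g (ketbra psi i j)).
    { induction n; [simpl|].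
      - replace (1 / 1) with 1 by field. exact g1.
      - cbn [sum_f_R0]. rewrite IHn. rewrite Lpow_ketbra; auto.
        replace (Cscal _ C0) with C0 by Csolve. rewrite g0; ring. }
    rewrite H0. unfold R_dist. rewrite Rminus_diag_eq, Rabs_R0; auto. }
  split; apply Hs; simpl; ring.
Qed.


Lemma mapply_lin : forall N M w1 w2 a c i,
  mapply N M (fun k => Csub (Cmul a (w1 k)) (Cmul c (w2 k))) i =
  Csub (Cmul a (mapply N M w1 i)) (Cmul c (mapply N M w2 i)).
Proof. intros. unfold mapply. rewrite <- !Csum_mull, <- Csum_sub. apply Csum_ext; intros; Csolve. Qed.

Lemma H0_comb : forall n d K Ns rhod x y a c,
  H0 n d K Ns rhod x -> H0 n d K Ns rhod y ->
  H0 n d K Ns rhod (fun i => Csub (Cmul a (x i)) (Cmul c (y i))).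
Proof.
  intros n d K Ns rhod x y a c Hx Hy k Hk.
  destruct (Hx k Hk) as [w1 Hw1]. destruct (Hy k Hk) as [w2 Hw2].
  exists (fun i => Csub (Cmul a (w1 i)) (Cmul c (w2 i))). intros i Hi.
  rewrite mapply_lin, Hw1, Hw2; auto.
Qed.

Lemma key : forall n d K Ns psi (H' : Vec -> Prop)
  (hH'w : forall v, H' v -> perp_Hw n d K Ns psi v) (s r y : Mat -> Vec -> Vec) , True.
Proof. auto. Qed.

Lemma key_orth : forall n d K Ns psi (H' : Vec -> Prop)
  (hH'w : forall v, H' v -> perp_Hw n d K Ns psi v) (s r : Mat) (y : Vec) (a : C),
  (forall v, H0 n d K Ns (ketbra psi) (mapply (dimH n d) s v)) ->
  H0 n d K Ns (ketbra psi) y ->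
  a = inner (dimH n d) psi y ->
  (forall v, H' (mapply (dimH n d) r v)) ->
  forall j l, (j < dimH n d)%nat -> (l < dimH n d)%nat ->
  Csum (dimH n d) (fun i => Cmul (Cconj (Csub (Cmul a (s i j))
       (Cmul (Csum (dimH n d) (fun k => Cmul (Cconj (psi k)) (s k j))) (y i)))) (r i l)) = C0.
Proof.
  intros n d K Ns psi H' hH'w s r y a Hs Hy Ha Hr j l Hj Hl.
  set (N := dimH n d) in *.
  set (cj := Csum N (fun k => Cmul (Cconj (psi k)) (s k j))).
  set (z := fun i => Csub (Cmul a (mapply N s (ev j) i)) (Cmul cj (y i))).
  assert (Hz : Hw n d K Ns psi z).
  { split.
    - apply H0_comb; auto.
    - intros u [c0 Hu]. unfold inner.
      rewrite (Csum_ext _ _ (fun i => Cmul (Cconj c0) (Csub (Cmul a (Cmul (Cconj (psi i)) (s i j)))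
            (Cmul cj (Cmul (Cconj (psi i)) (y i)))))).
      2:{ intros i Hi. rewrite Hu; auto. unfold z. rewrite mapply_ev; auto. Csolve. }
      rewrite Csum_mull, Csum_sub, !Csum_mull. fold cj. rewrite Ha. unfold inner. change (dimH n d) with N. fold cj. set (q := Csum N _). clearbody q cj. Csolve. }
  pose proof (hH'w _ (Hr (ev l)) z Hz). unfold inner in H.
  rewrite <- H. apply Csum_ext; intros i Hi. unfold z. rewrite !mapply_ev; auto.
Qed.


Section Est.
Variable N : nat.
Variables (psi : Vec) (r s s0 : Mat) (delta : R).
Hypothesis hpn : Csum N (fun i => Cmul (Cconj (psi i)) (psi i)) = Cone.
Hypothesis hpb : forall i, (i < N)%nat -> cm (psi i) <= 2.
Hypothesis hr : is_density N r.
Hypothesis hs : is_density N s.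
Hypothesis hs0 : is_density N s0.
Hypothesis hd0 : 0 <= delta.
Hypothesis hd1 : delta <= 1.
Hypothesis hsr : forall i j, (i < N)%nat -> (j < N)%nat -> cm (Csub (s i j) (r i j)) <= delta.
Hypothesis hs0p : forall i j, (i < N)%nat -> (j < N)%nat -> cm (Csub (s0 i j) (ketbra psi i j)) <= delta.

Lemma Rabs_le_cm : forall x, Rabs (Re x) <= cm x.
Proof. intros; unfold cm; pose proof (Rabs_pos (Im x)); lra. Qed.

Definition yv i := mapply N s0 psi i.
Definition av := inner N psi yv.
Definition cv j := Csum N (fun k => Cmul (Cconj (psi k)) (s k j)).
Definition wv j := mapply N r psi j.

Let nN := INR N.
Lemma Rsum_const_eq : forall n f g, (forall k, f k = g k) -> Rsum n f = Rsum n g.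
Proof. induction n; intros; simpl; auto. rewrite (IHn f g), H; auto. Qed.
Lemma nN_pos : 0 <= nN.
Proof. apply pos_INR. Qed.

Lemma b1 : forall i, (i < N)%nat -> cm (Csub (yv i) (psi i)) <= nN * (delta * 2).
Proof.
  intros. replace (Csub (yv i) (psi i)) with
    (Csum N (fun k => Cmul (Csub (s0 i k) (ketbra psi i k)) (psi k))).
  - apply cm_Csum_bound; intros. apply cm_mul_bound; auto.
  - unfold yv, mapply, ketbra.
    transitivity (Csub (Csum N (fun k => Cmul (s0 i k) (psi k)))
                       (Csum N (fun k => Cmul (Cmul (psi i) (Cconj (psi k))) (psi k)))).
    + rewrite <- Csum_sub. apply Csum_ext; intros; Csolve.
    + f_equal. rewrite (Csum_ext _ _ (fun k => Cmul (psi i) (Cmul (Cconj (psi k)) (psi k)))) by (intros; Csolve).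
      rewrite Csum_mull, hpn. Csolve.
Qed.

Lemma b2 : forall i, (i < N)%nat -> cm (yv i) <= 2 + 2 * nN.
Proof. intros. replace (yv i) with (Cadd (psi i) (Csub (yv i) (psi i))) by Csolve.
  eapply Rle_trans; [apply cm_add|]. pose proof (b1 i H). pose proof (hpb i H).
  pose proof nN_pos. nra. Qed.

Lemma b3 : cm (Csub av Cone) <= nN * (2 * (nN * (delta * 2))).
Proof.
  replace (Csub av Cone) with (Csum N (fun i => Cmul (Cconj (psi i)) (Csub (yv i) (psi i)))).
  - apply cm_Csum_bound; intros. apply cm_mul_bound. rewrite cm_conj; auto. apply b1; auto.
  - rewrite <- hpn. unfold av, inner. rewrite <- Csum_sub. apply Csum_ext; intros; Csolve.
Qed.

Lemma b4 : forall i j, (i < N)%nat -> (j < N)%nat ->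
  cm (Csub (Cmul av (s i j)) (r i j)) <= nN * (2 * (nN * (delta * 2))) * 2 + delta.
Proof. intros.
  replace (Csub (Cmul av (s i j)) (r i j)) with (Cadd (Cmul (Csub av Cone) (s i j)) (Csub (s i j) (r i j))) by Csolve.
  eapply Rle_trans; [apply cm_add|]. apply Rplus_le_compat; auto.
  apply cm_mul_bound. apply b3. apply (dens_cm N s hs); auto. Qed.

Lemma wconj : forall j, (j < N)%nat -> Cconj (wv j) = Csum N (fun k => Cmul (Cconj (psi k)) (r k j)).
Proof. intros. unfold wv, mapply. rewrite <- Csum_conj. apply Csum_ext; intros.
  rewrite (dens_herm N r hr k j); auto. Csolve. Qed.

Lemma b5 : forall j, (j < N)%nat -> cm (Csub (cv j) (Cconj (wv j))) <= nN * (2 * delta).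
Proof. intros. rewrite wconj; auto. unfold cv. rewrite <- Csum_sub.
  apply cm_Csum_bound; intros.
  replace (Csub _ _) with (Cmul (Cconj (psi k)) (Csub (s k j) (r k j))) by Csolve.
  apply cm_mul_bound; auto. rewrite cm_conj; auto. Qed.

Lemma b6 : forall j, (j < N)%nat -> cm (wv j) <= nN * (2 * 2).
Proof. intros. unfold wv, mapply. apply cm_Csum_bound; intros. apply cm_mul_bound; auto.
  apply (dens_cm N r hr); auto. Qed.

Lemma b7 : forall i j, (i < N)%nat -> (j < N)%nat ->
  cm (Csub (Cmul (cv j) (yv i)) (Cmul (Cconj (wv j)) (psi i))) <=
  nN * (2 * delta) * (2 + 2 * nN) + nN * (2 * 2) * (nN * (delta * 2)).
Proof. intros.
  replace (Csub _ _) with (Cadd (Cmul (Csub (cv j) (Cconj (wv j))) (yv i)) (Cmul (Cconj (wv j)) (Csub (yv i) (psi i)))) by Csolve.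
  eapply Rle_trans; [apply cm_add|]. apply Rplus_le_compat; apply cm_mul_bound.
  apply b5; auto. apply b2; auto. rewrite cm_conj; apply b6; auto. apply b1; auto. Qed.


Definition xv j i := Csub (r j i) (Cmul (wv j) (Cconj (psi i))).
Definition zv j i := Csub (Cmul av (s i j)) (Cmul (cv j) (yv i)).
Hypothesis horth : forall j, (j < N)%nat -> Csum N (fun i => Cmul (Cconj (zv j i)) (r i j)) = C0.

Lemma A1 : forall j, (j < N)%nat ->
  Rsum N (fun i => Cnorm2 (xv j i)) = Re (Csum N (fun i => Cmul (xv j i) (r i j))).
Proof.
  intros.
  rewrite (Csum_ext _ _ (fun i => Cadd (Cmul (xv j i) (Cconj (xv j i)))
              (Cmul (Cconj (wv j)) (Cmul (xv j i) (psi i))))).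
  2:{ intros. rewrite (dens_herm N r hr k j); auto. unfold xv. Csolve. }
  rewrite Csum_add, Csum_mull.
  replace (Csum N (fun i => Cmul (xv j i) (psi i))) with C0.
  - simpl. rewrite Re_Csum. 
    rewrite (Rsum_const_eq N (fun k => Re (Cmul (xv j k) (Cconj (xv j k)))) (fun i => Cnorm2 (xv j i))). lra. intros; unfold Cnorm2; destruct (xv j k); simpl; ring.
  - unfold xv. rewrite (Csum_ext _ _ (fun i => Csub (Cmul (r j i) (psi i)) (Cmul (wv j) (Cmul (Cconj (psi i)) (psi i))))) by (intros; Csolve).
    rewrite Csum_sub, Csum_mull, hpn. unfold wv at 1, mapply. Csolve.
Qed.

Definition Tb := nN * (2 * (nN * (delta * 2))) * 2 + delta +
  (nN * (2 * delta) * (2 + 2 * nN) + nN * (2 * 2) * (nN * (delta * 2))).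

Lemma A2 : forall j, (j < N)%nat -> cm (Csum N (fun i => Cmul (xv j i) (r i j))) <= nN * (Tb * 2).
Proof.
  intros.
  replace (Csum N (fun i => Cmul (xv j i) (r i j))) with
    (Csub (Csum N (fun i => Cmul (xv j i) (r i j))) (Csum N (fun i => Cmul (Cconj (zv j i)) (r i j)))).
  2:{ rewrite horth; auto. Csolve. }
  rewrite <- Csum_sub. apply cm_Csum_bound; intros i Hi.
  replace (Csub _ _) with (Cmul (Cconj (Cadd (Copp (Csub (Cmul av (s i j)) (r i j)))
        (Csub (Cmul (cv j) (yv i)) (Cmul (Cconj (wv j)) (psi i))))) (r i j)).
  2:{ unfold xv, zv. rewrite (dens_herm N r hr j i); auto. Csolve. }
  apply cm_mul_bound. 2: apply (dens_cm N r hr); auto.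
  rewrite cm_conj. eapply Rle_trans; [apply cm_add|]. rewrite cm_opp. unfold Tb.
  apply Rplus_le_compat. apply b4; auto. apply b7; auto.
Qed.

Lemma A3 : forall j i, (j < N)%nat -> (i < N)%nat -> Cnorm2 (xv j i) <= nN * (Tb * 2).
Proof.
  intros. eapply Rle_trans; [| apply A2; auto].
  eapply Rle_trans; [| apply Rabs_le_cm].
  rewrite <- A1; auto.
  eapply Rle_trans; [| apply Rle_abs].
  apply (Rsum_term N (fun i => Cnorm2 (xv j i)) i); auto. intros; apply Cnorm2_nonneg. all: auto.
Qed.

Variable gam : R.
Hypothesis hg0 : 0 <= gam.
Hypothesis hg : 2 * (nN * (Tb * 2)) <= gam * gam.

Lemma B0 : forall j i, (j < N)%nat -> (i < N)%nat -> cm (xv j i) <= gam.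
Proof. intros. pose proof (A3 j i H H0). pose proof (cm_sq (xv j i)). pose proof (cm_nonneg (xv j i)). nra. Qed.

Lemma B1 : forall j k, (j < N)%nat -> (k < N)%nat -> cm (Csub (r j k) (Cmul (psi j) (Cconj (wv k)))) <= gam.
Proof. intros. replace (Csub _ _) with (Cconj (xv k j)). rewrite cm_conj; apply B0; auto.
  unfold xv. rewrite (dens_herm N r hr j k); auto. Csolve. Qed.

Definition qv := Csum N (fun k => Cmul (Cconj (wv k)) (psi k)).

Lemma B2 : forall j, (j < N)%nat -> cm (Csub (wv j) (Cmul (psi j) qv)) <= nN * (gam * 2).
Proof. intros. replace (Csub (wv j) (Cmul (psi j) qv)) with
   (Csum N (fun k => Cmul (Csub (r j k) (Cmul (psi j) (Cconj (wv k)))) (psi k))).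
  - apply cm_Csum_bound; intros; apply cm_mul_bound; auto. apply B1; auto.
  - unfold qv. rewrite <- Csum_mull. unfold wv, mapply. rewrite <- Csum_sub.
    apply Csum_ext; intros; Csolve. Qed.

Lemma B3 : forall j k, (j < N)%nat -> (k < N)%nat ->
  cm (Csub (r j k) (Cmul qv (ketbra psi j k))) <= gam + nN * (gam * 2) * 2.
Proof. intros. replace (Csub _ _) with (Cadd (xv j k) (Cmul (Csub (wv j) (Cmul (psi j) qv)) (Cconj (psi k)))).
  eapply Rle_trans; [apply cm_add|]. apply Rplus_le_compat. apply B0; auto.
  apply cm_mul_bound. apply B2; auto. rewrite cm_conj; auto.
  unfold xv, ketbra. Csolve. Qed.

Lemma hpn' : Csum N (fun i => ketbra psi i i) = Cone.
Proof. rewrite <- hpn. apply Csum_ext; intros; unfold ketbra; Csolve. Qed.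

Lemma B4 : cm (Csub Cone qv) <= nN * (gam + nN * (gam * 2) * 2).
Proof.
  replace (Csub Cone qv) with (Csum N (fun j => Csub (r j j) (Cmul qv (ketbra psi j j)))).
  - apply cm_Csum_bound; intros; apply B3; auto.
  - rewrite Csum_sub, Csum_mull, hpn', (dens_trace N r hr). Csolve.
Qed.

Lemma B5 : forall j k, (j < N)%nat -> (k < N)%nat ->
  cm (Csub (r j k) (ketbra psi j k)) <=
  (gam + nN * (gam * 2) * 2) + nN * (gam + nN * (gam * 2) * 2) * (2 * 2).
Proof. intros. replace (Csub _ _) with (Cadd (Csub (r j k) (Cmul qv (ketbra psi j k))) (Cmul (Csub qv Cone) (ketbra psi j k))).
  eapply Rle_trans; [apply cm_add|]. apply Rplus_le_compat. apply B3; auto.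
  apply cm_mul_bound. rewrite cm_sub_sym; apply B4. unfold ketbra. apply cm_mul_bound; auto. rewrite cm_conj; auto.
  Csolve. Qed.

End Est.


Definition Pc (N : nat) : R := let nN := INR N in
  nN * (2 * (nN * 2)) * 2 + 1 + (nN * 2 * (2 + 2 * nN) + nN * (2 * 2) * (nN * 2)).

Lemma Tb_lin : forall N delta, Tb N delta = delta * Pc N.
Proof. intros; unfold Tb, Pc; simpl; ring. Qed.

Lemma Pc_pos : forall N, 0 <= Pc N.
Proof. intros; unfold Pc. pose proof (pos_INR N). simpl. nra. Qed.

Lemma hs_entry : forall N A B i j, (i < N)%nat -> (j < N)%nat ->
  Cnorm2 (Csub (A i j) (B i j)) <= hsdist2 N A B.
Proof. intros. unfold hsdist2.
  eapply Rle_trans; [|apply (Rsum_term N (fun i => Rsum N (fun j => Cnorm2 (Csub (A i j) (B i j)))) i)].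
  - apply (Rsum_term N (fun j => Cnorm2 (Csub (A i j) (B i j))) j); auto. intros; apply Cnorm2_nonneg.
  - intros; apply Rsum_nonneg; intros; apply Cnorm2_nonneg.
  - auto.
Qed.

Lemma hs_close : forall N A B delta, 0 < delta -> hsdist2 N A B < delta * delta / 4 ->
  forall i j, (i < N)%nat -> (j < N)%nat -> cm (Csub (A i j) (B i j)) <= delta.
Proof. intros. pose proof (hs_entry N A B i j H1 H2). pose proof (cm_sq (Csub (A i j) (B i j))).
  pose proof (cm_nonneg (Csub (A i j) (B i j))). nra. Qed.

Lemma hs_bound : forall N A B beta, (forall i j, (i < N)%nat -> (j < N)%nat -> cm (Csub (A i j) (B i j)) <= beta) ->
  hsdist2 N A B <= INR N * (INR N * (beta * beta)).
Proof. intros. unfold hsdist2. apply Rsum_bound; intros. apply Rsum_bound; intros.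
  eapply Rle_trans; [apply Cnorm2_cm|]. pose proof (cm_nonneg (Csub (A k k0) (B k k0))).
  pose proof (H k k0 H0 H1). nra. Qed.

Theorem theorem3
  (n : nat) (d : nat -> nat) (hd : forall a, (a < n)%nat -> (1 <= d a)%nat)
  (K : nat) (Ns : nat -> nat -> bool)
  (hNs : forall k, (k < K)%nat ->
           (forall a, Ns k a = true -> (a < n)%nat) /\
           (exists a, (a < n)%nat /\ Ns k a = false))
  (Ds : nat -> Mat) (psi : Vec)
  (hpsi : Re (inner (dimH n d) psi psi) = 1)
  (hQL : forall k, (k < K)%nat -> QL n d (Ns k) (Ds k))
  (hkill : forall k, (k < K)%nat -> forall i, (i < dimH n d)%nat ->
             mapply (dimH n d) (Ds k) psi i = C0)
  (hGAS : forall (rho0 : Mat) (r : R -> Mat),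
            is_density (dimH n d) rho0 ->
            (forall t, 0 <= t -> Evol (dimH n d) K Ds t rho0 (r t)) ->
            forall eps, 0 < eps -> exists T, forall t, T <= t ->
              exists s, dens_in (dimH n d) (H0 n d K Ns (ketbra psi)) s /\
                        hsdist2 (dimH n d) (r t) s < eps)
  (H' : Vec -> Prop) (hH' : is_subspace (dimH n d) H')
  (hdH' : forall v, Hd (dimH n d) psi v -> H' v)
  (hH'w : forall v, H' v -> perp_Hw n d K Ns psi v)
  (hinv : forall (rho0 s : Mat) (t : R), 0 <= t ->
            dens_in (dimH n d) H' rho0 -> Evol (dimH n d) K Ds t rho0 s ->
            dens_in (dimH n d) H' s) :
  forall (rho0 : Mat) (r : R -> Mat),
    dens_in (dimH n d) H' rho0 ->
    (forall t, 0 <= t -> Evol (dimH n d) K Ds t rho0 (r t)) ->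
    forall eps, 0 < eps -> exists T, forall t, T <= t ->
      hsdist2 (dimH n d) (r t) (ketbra psi) < eps.
Proof.
  intros rho0 r Hr0 HEv eps Heps.
  pose proof (pos_INR (dimH n d)) as HN.
  set (nN := INR (dimH n d)) in *.
  set (L := (1 + 4 * nN) * (1 + 4 * nN)).
  assert (HL : 1 <= L) by (unfold L; nra).
  set (e' := eps / (2 * (nN * nN + 1) * (L * L))).
  assert (He' : 0 < e') by (unfold e'; apply Rdiv_lt_0_compat; auto; nra).
  set (gam := sqrt e').
  assert (Hg : gam * gam = e') by (apply sqrt_sqrt; lra).
  assert (Hg0 : 0 < gam) by (apply sqrt_lt_R0; auto).
  set (P := Pc (dimH n d)).
  assert (HP : 0 <= P) by apply Pc_pos.
  set (delta := Rmin 1 (gam * gam / (4 * nN * P + 1))).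
  assert (Hq : 0 < gam * gam / (4 * nN * P + 1)) by (apply Rdiv_lt_0_compat; nra).
  assert (Hd0 : 0 < delta) by (unfold delta; apply Rmin_glb_lt; lra).
  assert (Hd1 : delta <= 1) by apply Rmin_l.
  assert (Hd2 : delta * (4 * nN * P + 1) <= gam * gam).
  { pose proof (Rmin_r 1 (gam * gam / (4 * nN * P + 1))). fold delta in H.
    apply (Rmult_le_compat_r (4 * nN * P + 1)) in H; [|nra].
    assert (E : gam * gam / (4 * nN * P + 1) * (4 * nN * P + 1) = gam * gam) by (field; nra).
    rewrite E in H. exact H. }
  assert (Heta : 0 < delta * delta / 4) by nra.
  destruct (hGAS (ketbra psi) (fun _ => ketbra psi) (ketbra_density _ psi hpsi)
     (fun t _ => Evol_ketbra _ K Ds psi hkill t) _ Heta) as [T0 HT0].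
  destruct (HT0 T0 (Rle_refl _)) as [s0 [Hs0 Hs0d]].
  destruct (hGAS rho0 r (proj1 Hr0) HEv _ Heta) as [T1 HT1].
  exists (Rmax T1 0). intros t Ht.
  assert (Ht0 : 0 <= t) by (eapply Rle_trans; [apply Rmax_r| exact Ht]).
  assert (Ht1 : T1 <= t) by (eapply Rle_trans; [apply Rmax_l| exact Ht]).
  destruct (HT1 t Ht1) as [s [Hs Hsd]].
  pose proof (hinv rho0 (r t) t Ht0 Hr0 (HEv t Ht0)) as Hrt.
  assert (hpn : Csum (dimH n d) (fun i => Cmul (Cconj (psi i)) (psi i)) = Cone) by exact (psi_inner _ psi hpsi).
  assert (Hb : forall j k, (j < dimH n d)%nat -> (k < dimH n d)%nat ->
      cm (Csub (r t j k) (ketbra psi j k)) <=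
      (gam + nN * (gam * 2) * 2) + nN * (gam + nN * (gam * 2) * 2) * (2 * 2)).
  { apply (B5 (dimH n d) psi (r t) s s0 delta hpn (psi_bound _ psi hpsi) (proj1 Hrt) (proj1 Hs)); try lra.
    - intros. rewrite cm_sub_sym. apply (hs_close (dimH n d) (r t) s delta); auto.
    - intros. rewrite cm_sub_sym. apply (hs_close (dimH n d) (ketbra psi) s0 delta); auto.
    - intros j Hj. unfold zv.
      apply (key_orth n d K Ns psi H' hH'w s (r t) (yv (dimH n d) psi s0) (av (dimH n d) psi s0)); auto.
      all: try (intros v; apply (proj2 Hs)).
      all: try apply (proj2 Hs0).
      all: try apply (proj2 Hrt).
    - rewrite Tb_lin. fold nN P. nra. }
  eapply Rle_lt_trans; [apply hs_bound; exact Hb|]. fold nN.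
  replace ((gam + nN * (gam * 2) * 2) + nN * (gam + nN * (gam * 2) * 2) * (2 * 2)) with (L * gam) by (unfold L; ring).
  replace (nN * (nN * (L * gam * (L * gam)))) with ((nN * nN) * (L * L) * e') by (rewrite <- Hg; ring).
  unfold e'. assert (0 < L * L) by nra.
  apply (Rmult_lt_reg_r (2 * (nN * nN + 1) * (L * L))). nra.
  replace (nN * nN * (L * L) * (eps / (2 * (nN * nN + 1) * (L * L))) * (2 * (nN * nN + 1) * (L * L)))
    with (nN * nN * (L * L) * eps) by (field; nra).
  assert (0 < eps * (L * L)) by nra. assert (0 <= nN * nN) by nra. nra.
Qed.
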